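(* The gauge-invariant subregion algebra satisfies $$\widetilde{\mathcal A}_r:=\Pi_{GI}\mathcal A_r\Pi_{GI}=\hat{\mathcal A}_r^\Pi\,\Pi_{GI}=\{\hat{\mathcal O}\Pi_{GI}:\hat{\mathcal O}\in\hat{\mathcal A}_r,\ [\hat{\mathcal O},\Pi_{GI}]=0\}.$$
   Context: Setup. Let $G$ be a compact Lie group (possibly finite) with normalized Haar measure $dg$ ($\int dg=1$). Let $\Lambda=(V,E)$ be a finite directed graph; loops and multiple edges are allowed. Each edge $e$ carries $\mathcal H_e=L^2(G)$ with unitaries $L_e(g)|h\rangle_e=|gh\rangle_e$ and $R_e(g^{-1})|h\rangle_e=|hg^{-1}\rangle_e$. Each vertex $v$ carries a Hilbert space $\mathcal H_v$ with a unitary representation $U_v$ of $G$. All these spaces are taken finite-dimensional by truncating to finitely many irreducible isotypic sectors, which are invariant under the group actions. The pre-gauged space is $\mathcal H=\bigotimes_v\mathcal H_v\otimes\bigotimes_e\mathcal H_e$. The gauge transformation at $v$ is $A_v(g)=U_v(g)\prod_{e\in E^-(v)}L_e(g)\prod_{e\in E^+(v)}R_e(g^{-1})$, where $E^-(v)$ is the set of edges oriented out of $v$ and $E^+(v)$ the set of edges oriented into $v$. Set $\Pi_v=\int dg\,A_v(g)$; these are mutually commuting orthogonal projections. Set $\Pi_{GI}=\prod_v\Pi_v$. Subregions. A subregion $r$ is an arbitrary subset of $V\cup E$, and $\bar r$ is its complement. Let $\mathcal H_r=\bigotimes_{x\in r}\mathcal H_x$ and $\mathcal A_r=\mathcal B(\mathcal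 H_r)\otimes 1_{\bar r}$. Let $V_r$ be the set of vertices $v$ such that $v$ and all edges incident to $v$ lie in $r$, and put $\Pi_{V_r}=\prod_{v\in V_r}\Pi_v$. Define $\hat{\mathcal A}_r=\{\Pi_{V_r}\mathcal O\Pi_{V_r}:\mathcal O\in\mathcal A_r\}$. *)

(* Defs.v *)
From HB Require Import structures.
From mathcomp Require Import all_boot all_order all_algebra.
From mathcomp Require Import complex.
From mathcomp Require Import classical_sets reals measure lebesgue_measure
  lebesgue_integral probability.

Set Implicit Arguments.
Unset Strict Implicit.
Unset Printing Implicit Defensive.

Import Order.TTheory GRing.Theory Num.Theory.
Local Open Scope ring_scope.

(* The compact group G, modelled as an abstract group carried by a          *)
(* measurable space, equipped with its normalized Haar measure mu: a        *)
(* probability measure invariant under left and right translations.         *)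

Definition is_group (G : Type) (mul : G -> G -> G) (inv : G -> G) (one : G)
  : Prop :=
  [/\ forall a b c, mul a (mul b c) = mul (mul a b) c,
      forall a, mul one a = a /\ mul a one = a
    & forall a, mul (inv a) a = one /\ mul a (inv a) = one].

Definition is_haar (R : realType) (d : measure_display) (G : measurableType d)
  (mul : G -> G -> G) (mu : probability G R) : Prop :=
  forall h : G,
    [/\ measurable_fun setT (fun g => mul h g),
        measurable_fun setT (fun g => mul g h),
        (forall A : set G, measurable A ->
           mu ((fun g => mul h g) @^-1` A)%classic = mu A)
      & (forall A : set G, measurable A ->
           mu ((fun g => mul g h) @^-1` A)%classic = mu A)].

Definition cint (R : realType) (d : measure_display) (G : measurableType d)
  (mu : probability G R) (f : G -> R[i]) : R[i] :=
  Complex (Rintegral mu setT (fun g => complex.Re (f g)))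
          (Rintegral mu setT (fun g => complex.Im (f g))).

Definition adj (R : realType) m n (A : 'M[R[i]]_(m, n)) : 'M[R[i]]_(n, m) :=
  (map_mx (fun z : R[i] => Num.conj z) A)^T.

Definition unitary_rep (R : realType) (d : measure_display)
  (G : measurableType d) (mul : G -> G -> G) (one : G) n
  (rho : G -> 'M[R[i]]_n) : Prop :=
  [/\ rho one = 1%:M,
      forall g h, rho (mul g h) = rho g *m rho h,
      forall g, rho g *m adj (rho g) = 1%:M
    & forall i j, measurable_fun setT (fun g => complex.Re (rho g i j)) /\
                  measurable_fun setT (fun g => complex.Im (rho g i j))].

(* Sites are V + E; site x carries C^(dim x).                               *)

Section Lattice.
Variables (V E : finType) (dim : V + E -> nat).

Definition site := (V + E)%type.

(* Basis configurations of the pre-gauged space  H = (x)_x C^(dim x). *)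
Definition conf := {dffun forall x : site, 'I_(dim x)}.

Definition op (R : realType) := 'M[R[i]]_#|{: conf}|.

Definition mxo (R : realType) (f : conf -> conf -> R[i]) : op R :=
  \matrix_(i, j) f (enum_val i) (enum_val j).

Definition tens (R : realType) (M : forall x : site, 'M[R[i]]_(dim x)) : op R :=
  mxo (fun c c' => \prod_(x : site) M x (c x) (c' x)).

Definition rconf (r : {set site}) :=
  {dffun forall y : {x : site | x \in r}, 'I_(dim (val y))}.

Definition restr (r : {set site}) (c : conf) : rconf r :=
  [ffun y => c (val y)].

(* o (x) 1_{rbar}  for o in B(H_r). *)
Definition embed (R : realType) (r : {set site})
  (o : 'M[R[i]]_#|{: rconf r}|) : op R :=
  mxo (fun c c' =>
     o (enum_rank (restr r c)) (enum_rank (restr r c'))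
     * ([forall x in ~: r, c x == c' x])%:R).

Definition in_alg (R : realType) (r : {set site}) (O : op R) : Prop :=
  exists o : 'M[R[i]]_#|{: rconf r}|, O = embed o.

Section Gauge.
Variables (R : realType) (d : measure_display) (G : measurableType d).
Variables (src tgt : E -> V).
Variables (U : forall v : V, G -> 'M[R[i]]_(dim (inl v))).
Variables (L Rinv : forall e : E, G -> 'M[R[i]]_(dim (inr e))).
(* Rinv e g stands for R_e(g^-1), i.e. |h> |-> |h g^-1>. *)

Definition gauge_site (v : V) (g : G) (x : site) : 'M[R[i]]_(dim x) :=
  match x as x' return 'M[R[i]]_(dim x') with
  | inl w => if w == v then U w g else 1%:M
  | inr e => (if src e == v then L e g else 1%:M)
             *m (if tgt e == v then Rinv e g else 1%:M)
  end.

Definition gauge (v : V) (g : G) : op R := tens (gauge_site v g).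

Definition Pi (mu : probability G R) (v : V) : op R :=
  \matrix_(i, j) cint mu (fun g => gauge v g i j).

Definition Pi_GI (mu : probability G R) : op R := \prod_(v : V) Pi mu v.

Definition Vr (r : {set site}) : {set V} :=
  [set v | (inl v \in r) &&
           [forall e : E, ((src e == v) || (tgt e == v)) ==> (inr e \in r)]].

Definition Pi_Vr (mu : probability G R) (r : {set site}) : op R :=
  \prod_(v in Vr r) Pi mu v.

Definition in_hat_alg (mu : probability G R) (r : {set site}) (X : op R)
  : Prop :=
  exists O : op R, in_alg r O /\ X = Pi_Vr mu r *m O *m Pi_Vr mu r.

End Gauge.
End Lattice.

(* Main.v *)
Require Import Defs.
From HB Require Import structures.
From mathcomp Require Import all_boot all_order all_algebra.
From mathcomp Require Import complex.
From mathcomp Require Import classical_sets reals measure lebesgue_measure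
  lebesgue_integral probability.
From mathcomp Require boolp ereal normedtype measurable_realfun lra.

Module Helpers.
Import boolp ereal normedtype measurable_realfun lra.
Set Implicit Arguments.
Unset Strict Implicit.
Unset Printing Implicit Defensive.
Import Order.TTheory GRing.Theory Num.Theory.
Local Open Scope ereal_scope.
Local Open Scope ring_scope.

Section Analytic.
Context (R : realType) (d : measure_display) (G : measurableType d)
  (mu : probability G R).

Definition rnice (f : G -> R) :=
  measurable_fun setT f /\ exists M, forall g, `|f g| <= M.

Lemma rnice_int f : rnice f -> mu.-integrable setT (EFin \o f).
Proof.
case=> mf [M hM]; apply: measurable_bounded_integrable => //.
  have h1 := @probability_le1 _ _ _ mu setT measurableT.
  by apply: le_lt_trans h1 _; rewrite ltry.
exists M; split; first exact: num_real.
by move=> N hN x _; apply: le_trans (hM x) (ltW hN).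
Qed.

Lemma rnice_cst c : rnice (fun _ => c).
Proof. by split; [exact: measurable_cst | exists `|c|]. Qed.

Lemma rnice_add f h : rnice f -> rnice h -> rnice (fun g => f g + h g).
Proof.
case=> mf [M hM] [mh [N hN]]; split; first exact: measurable_funD.
exists (M + N) => g; apply: le_trans (ler_normD _ _) _; exact: lerD.
Qed.

Lemma rnice_opp f : rnice f -> rnice (fun g => - f g).
Proof.
case=> mf [M hM]; split; first exact: measurable_funN.
by exists M => g; rewrite normrN.
Qed.

Lemma rnice_mul f h : rnice f -> rnice h -> rnice (fun g => f g * h g).
Proof.
case=> mf [M hM] [mh [N hN]]; split; first exact: measurable_funM.
exists (M * N) => g; rewrite normrM; apply: ler_pM => //.
Qed.

Lemma RintD f h : rnice f -> rnice h ->
  Rintegral mu setT (fun g => f g + h g) = Rintegral mu setT f + Rintegral mu setT h.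
Proof. by move=> nf nh; rewrite RintegralD //; exact: rnice_int. Qed.

Lemma RintN f : rnice f ->
  Rintegral mu setT (fun g => - f g) = - Rintegral mu setT f.
Proof.
move=> nf; have := @RintegralZl _ _ _ mu setT f (-1) measurableT (rnice_int nf).
rewrite mulN1r => <-; by apply: eq_Rintegral => x _; rewrite mulN1r.
Qed.

Lemma RintZ c f : rnice f ->
  Rintegral mu setT (fun g => c * f g) = c * Rintegral mu setT f.
Proof. by move=> nf; rewrite RintegralZl //; exact: rnice_int. Qed.

Lemma Rint_cst c : Rintegral mu setT (fun _ => c) = c.
Proof.
rewrite Rintegral_cst //; transitivity (c * fine (1%E : \bar R)); last by rewrite mulr1.
congr (c * fine _); exact: probability_setT.
Qed.

Lemma Rint_comp (phi : G -> G) f : measurable_fun setT phi ->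
  (forall A, measurable A -> mu (phi @^-1` A)%classic = mu A) -> rnice f ->
  Rintegral mu setT (fun g => f (phi g)) = Rintegral mu setT f.
Proof.
move=> mphi hphi nf; rewrite /Rintegral; congr fine.
have mf : measurable_fun setT (EFin \o f).
  by apply/measurable_EFinP; case: nf.
have intf : mu.-integrable (phi @^-1` setT)%classic ((EFin \o f) \o phi).
  rewrite preimage_setT; apply: (rnice_int (f := f \o phi)).
  case: nf => mf' [M hM]; split; first exact: measurableT_comp.
  by exists M => g; exact: hM.
have := integral_pushforward mphi mf intf (@measurableT _ _).
rewrite preimage_setT => <-.
apply: eq_measure_integral => A mA _ /=; by rewrite /pushforward hphi.
Qed.


Lemma ReM (z w : R[i]) : complex.Re (z * w) = complex.Re z * complex.Re w - complex.Im z * complex.Im w.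
Proof. by case: z w => a b [c e]. Qed.
Lemma ImM (z w : R[i]) : complex.Im (z * w) = complex.Re z * complex.Im w + complex.Im z * complex.Re w.
Proof. by case: z w => a b [c e]. Qed.
Lemma ReD (z w : R[i]) : complex.Re (z + w) = complex.Re z + complex.Re w.
Proof. by case: z w => a b [c e]. Qed.
Lemma ImD (z w : R[i]) : complex.Im (z + w) = complex.Im z + complex.Im w.
Proof. by case: z w => a b [c e]. Qed.

Definition cnice (f : G -> R[i]) :=
  rnice (fun g => complex.Re (f g)) /\ rnice (fun g => complex.Im (f g)).

Lemma rnice_sub f h : rnice f -> rnice h -> rnice (fun g => f g - h g).
Proof. by move=> nf nh; apply: rnice_add => //; exact: rnice_opp. Qed.

Lemma cnice_cst c : cnice (fun _ => c).
Proof. split; exact: rnice_cst. Qed.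

Lemma cnice_add f h : cnice f -> cnice h -> cnice (fun g => f g + h g).
Proof.
case=> [a b] [c e]; split.
  by under [X in rnice X]funext do rewrite ReD; exact: rnice_add.
by under [X in rnice X]funext do rewrite ImD; exact: rnice_add.
Qed.

Lemma cnice_mul f h : cnice f -> cnice h -> cnice (fun g => f g * h g).
Proof.
case=> [a b] [c e]; split.
  by under [X in rnice X]funext do rewrite ReM; apply: rnice_sub; exact: rnice_mul.
by under [X in rnice X]funext do rewrite ImM; apply: rnice_add; exact: rnice_mul.
Qed.

Lemma cnice_sum (I : Type) (s : seq I) (F : I -> G -> R[i]) :
  (forall i, cnice (F i)) -> cnice (fun g => \sum_(i <- s) F i g).
Proof.
move=> hF; elim: s => [|i s IH].
  by under [X in cnice X]funext do rewrite big_nil; exact: cnice_cst.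
under [X in cnice X]funext do rewrite big_cons; exact: cnice_add.
Qed.

Lemma cnice_prod (I : Type) (s : seq I) (F : I -> G -> R[i]) :
  (forall i, cnice (F i)) -> cnice (fun g => \prod_(i <- s) F i g).
Proof.
move=> hF; elim: s => [|i s IH].
  by under [X in cnice X]funext do rewrite big_nil; exact: cnice_cst.
under [X in cnice X]funext do rewrite big_cons; exact: cnice_mul.
Qed.

Lemma cnice_comp (phi : G -> G) f : measurable_fun setT phi -> cnice f ->
  cnice (fun g => f (phi g)).
Proof.
move=> mphi [[ma [M hM]] [mb [N hN]]]; split; split.
- exact: (measurableT_comp (f := fun g => complex.Re (f g))).
- by exists M.
- exact: (measurableT_comp (f := fun g => complex.Im (f g))).
- by exists N.
Qed.

Lemma cint_ext f h : f =1 h -> cint mu f = cint mu h.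
Proof. by move=> /funext ->. Qed.

Lemma cint_add f h : cnice f -> cnice h ->
  cint mu (fun g => f g + h g) = cint mu f + cint mu h.
Proof.
case=> [a b] [c e]; rewrite /cint.
under [X in Complex X _]eq_Rintegral do rewrite ReD.
under [X in Complex _ X]eq_Rintegral do rewrite ImD.
by rewrite RintD // RintD.
Qed.

Lemma cint_mull c f : cnice f -> cint mu (fun g => c * f g) = c * cint mu f.
Proof.
case=> [a b]; rewrite /cint.
under [X in Complex X _]eq_Rintegral do rewrite ReM.
under [X in Complex _ X]eq_Rintegral do rewrite ImM.
case: c => x y /=.
rewrite RintD; [|exact: rnice_mul (rnice_cst _) a|exact: rnice_opp (rnice_mul (rnice_cst _) b)].
rewrite RintN; last exact: rnice_mul (rnice_cst _) b.
rewrite RintD; [|exact: rnice_mul (rnice_cst _) b|exact: rnice_mul (rnice_cst _) a].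
by rewrite !RintZ.
Qed.

Lemma cint_mulr c f : cnice f -> cint mu (fun g => f g * c) = cint mu f * c.
Proof.
move=> nf; rewrite mulrC -cint_mull //; apply: cint_ext => g; exact: mulrC.
Qed.

Lemma cint_cst c : cint mu (fun _ => c) = c.
Proof. by rewrite /cint !Rint_cst; case: c. Qed.

Lemma cint_sum (I : Type) (s : seq I) (F : I -> G -> R[i]) :
  (forall i, cnice (F i)) ->
  cint mu (fun g => \sum_(i <- s) F i g) = \sum_(i <- s) cint mu (F i).
Proof.
move=> hF; elim: s => [|i s IH].
  transitivity (cint mu (fun _ => 0)); first by apply: cint_ext => g; rewrite big_nil.
  by rewrite cint_cst big_nil.
rewrite big_cons -IH -cint_add //; last exact: cnice_sum.
by apply: cint_ext => g; rewrite big_cons.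
Qed.

Lemma cint_comp (phi : G -> G) f : measurable_fun setT phi ->
  (forall A, measurable A -> mu (phi @^-1` A)%classic = mu A) -> cnice f ->
  cint mu (fun g => f (phi g)) = cint mu f.
Proof.
move=> mphi hphi [a b]; rewrite /cint.
rewrite (Rint_comp (f := fun g => complex.Re (f g))) //.
by rewrite (Rint_comp (f := fun g => complex.Im (f g))).
Qed.

Definition MI n (F : G -> 'M[R[i]]_n) : 'M[R[i]]_n :=
  \matrix_(i, j) cint mu (fun g => F g i j).

Definition mnice n (F : G -> 'M[R[i]]_n) := forall i j, cnice (fun g => F g i j).

Lemma mnice_cst n (M : 'M[R[i]]_n) : mnice (fun _ => M).
Proof. move=> i j; exact: cnice_cst. Qed.

Lemma mnice_mul n (F H : G -> 'M[R[i]]_n) : mnice F -> mnice H ->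
  mnice (fun g => F g *m H g).
Proof.
move=> nF nH i j.
under [X in cnice X]funext do rewrite mxE.
apply: cnice_sum => k; exact: cnice_mul.
Qed.

Lemma mnice_comp n (phi : G -> G) (F : G -> 'M[R[i]]_n) :
  measurable_fun setT phi -> mnice F -> mnice (fun g => F (phi g)).
Proof. move=> mphi nF i j; exact: (cnice_comp (f := fun g => F g i j)). Qed.

Lemma MI_ext n (F H : G -> 'M[R[i]]_n) : F =1 H -> MI F = MI H.
Proof. by move=> /funext ->. Qed.

Lemma MI_cst n (M : 'M[R[i]]_n) : MI (fun _ => M) = M.
Proof. by apply/matrixP => i j; rewrite mxE cint_cst. Qed.

Lemma MI_mull n (M : 'M[R[i]]_n) F : mnice F -> MI (fun g => M *m F g) = M *m MI F.
Proof.
move=> nF; apply/matrixP => i j; rewrite !mxE.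
under [X in cint _ X = _]funext do rewrite mxE.
rewrite cint_sum; last by move=> k; apply: cnice_mul => //; exact: cnice_cst.
apply: eq_bigr => k _; rewrite mxE; exact: cint_mull.
Qed.

Lemma MI_mulr n (M : 'M[R[i]]_n) F : mnice F -> MI (fun g => F g *m M) = MI F *m M.
Proof.
move=> nF; apply/matrixP => i j; rewrite !mxE.
under [X in cint _ X = _]funext do rewrite mxE.
rewrite cint_sum; last by move=> k; apply: cnice_mul => //; exact: cnice_cst.
apply: eq_bigr => k _; rewrite mxE; exact: cint_mulr.
Qed.

Lemma MI_comp n (phi : G -> G) (F : G -> 'M[R[i]]_n) : measurable_fun setT phi ->
  (forall A, measurable A -> mu (phi @^-1` A)%classic = mu A) -> mnice F ->
  MI (fun g => F (phi g)) = MI F.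
Proof. move=> mphi hphi nF; apply/matrixP => i j; rewrite !mxE; exact: cint_comp. Qed.

End Analytic.

Lemma big_distr_dffun (K : comNzRingType) (I : finType) (T_ : I -> finType)
  (F : forall i, T_ i -> K) :
  \prod_i \sum_(k : T_ i) F i k = \sum_(c : {dffun forall i, T_ i}) \prod_i F i (c i).
Proof.
pose P_ i := [ffun k => F i k].
transitivity (\prod_i \sum_(j in tagged_with T_ i) untag 0 (P_ i) j).
  apply: eq_bigr => i _.
  transitivity (\sum_(k : T_ i) P_ i k); first by apply: eq_bigr => k _; rewrite ffunE.
  exact: (big_tag (fun i k => P_ i k) i).
rewrite (bigA_distr_big_dep (fun i => tagged_with T_ i)).
rewrite -(big_fprod _ _ P_).
rewrite (reindex (@dffun_of_fprod I T_)); last exact/onW_bij/dffun_of_fprod_bij.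
apply: eq_bigr => t _; apply: eq_bigr => i _; by rewrite !ffunE.
Qed.

Section GTens.
Context (K : comNzRingType) (I : finType) (D : I -> nat).
Definition gconf := {dffun forall y : I, 'I_(D y)}.
Definition gtens (M : forall y, 'M[K]_(D y)) : 'M[K]_#|{: gconf}| :=
  \matrix_(i, j) \prod_y M y ((enum_val i : gconf) y) ((enum_val j : gconf) y).

Lemma sum_enum (F : 'I_#|{: gconf}| -> K) :
  \sum_k F k = \sum_(c : gconf) F (enum_rank c).
Proof.
rewrite (reindex (@enum_rank _)) //; exists enum_val => x _; [exact: enum_rankK | exact: enum_valK].
Qed.

Lemma gtens_mul M N : gtens M *m gtens N = gtens (fun y => M y *m N y).
Proof.
apply/matrixP => i j; rewrite /gtens !mxE sum_enum.
transitivity (\sum_(c : gconf) \prod_y (M y ((enum_val i : gconf) y) (c y) *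
    N y (c y) ((enum_val j : gconf) y))).
  by apply: eq_bigr => c _; rewrite !mxE enum_rankK -big_split.
rewrite -(big_distr_dffun (fun y k => M y ((enum_val i : gconf) y) k * N y k ((enum_val j : gconf) y))).
by apply: eq_bigr => y _; rewrite mxE.
Qed.

Lemma gtens1 : gtens (fun y => 1%:M) = 1%:M.
Proof.
apply/matrixP => i j; rewrite /gtens !mxE.
case: (eqVneq i j) => [->|nij].
  by apply: big1 => y _; rewrite mxE eqxx.
have : enum_val i != enum_val j by apply: contra nij => /eqP/enum_val_inj ->.
move=> hne; have [y hy] : exists y, (enum_val i : gconf) y != (enum_val j : gconf) y.
  apply/existsP; rewrite -negb_forall; apply: contra hne => /forallP h.
  by apply/eqP; apply/ffunP => y; apply/eqP; exact: h.
by rewrite (bigD1 y) //= mxE (negbTE hy) mul0r.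
Qed.
End GTens.

Section Kron.
Context (V E : finType) (dim : V + E -> nat) (R : realType) (r : {set site V E}).

Notation conf := (conf dim).
Notation op := (op dim R).
Notation rconf := (rconf dim).

Lemma tens_gtens (M : forall x, 'M[R[i]]_(dim x)) : tens M = gtens M.
Proof. by []. Qed.

Definition tensS (S : {set site V E}) (M : forall x, 'M[R[i]]_(dim x)) :
  'M[R[i]]_#|{: rconf S}| := gtens (fun y : {x | x \in S} => M (val y)).

Lemma notin_compl x : x \in r = false -> x \in ~: r.
Proof. by move=> h; rewrite inE h. Qed.

Definition glue_at (a : rconf r) (b : rconf (~: r)) (x : site V E) :
  forall t, x \in r = t -> 'I_(dim x) :=
  fun t => match t with
  | true => fun h => a (exist _ x h)
  | false => fun h => b (exist _ x (notin_compl h)) end.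

Definition glue a b : conf := [ffun x => glue_at a b (erefl (x \in r))].

Lemma glue_in a b x (h : x \in r) : glue a b x = a (exist _ x h).
Proof.
rewrite ffunE; move: (erefl (x \in r)).
suff gen : forall t (e : x \in r = t), glue_at a b e = a (exist _ x h) by apply: gen.
case=> e /=; first by rewrite (eq_irrelevance e h).
by exfalso; rewrite h in e.
Qed.

Lemma glue_out a b x (h : x \in ~: r) : glue a b x = b (exist _ x h).
Proof.
rewrite ffunE; move: (erefl (x \in r)).
have hn : x \in r = false by move: h; rewrite inE => /negbTE.
suff gen : forall t (e : x \in r = t), glue_at a b e = b (exist _ x h) by apply: gen.
case=> e /=; first by exfalso; rewrite hn in e.
by rewrite (eq_irrelevance (notin_compl e) h).
Qed.

Lemma restr_glue_r a b : restr r (glue a b) = a.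
Proof. by apply/ffunP => -[x hx]; rewrite ffunE /= glue_in. Qed.

Lemma restr_glue_c a b : restr (~: r) (glue a b) = b.
Proof. by apply/ffunP => -[x hx]; rewrite ffunE /= glue_out. Qed.

Lemma glueK c : glue (restr r c) (restr (~: r) c) = c.
Proof.
apply/ffunP => x; case: (boolP (x \in r)) => hx.
  by rewrite glue_in ffunE.
have hx' : x \in ~: r by rewrite inE.
by rewrite glue_out ffunE.
Qed.

Definition rkr (c : conf) : 'I_#|{: rconf r}| := enum_rank (restr r c).
Definition rkc (c : conf) : 'I_#|{: rconf (~: r)}| := enum_rank (restr (~: r) c).

Definition kron (A : 'M[R[i]]_#|{: rconf r}|) (B : 'M[R[i]]_#|{: rconf (~: r)}|) : op :=
  mxo (fun c c' => A (rkr c) (rkr c') * B (rkc c) (rkc c')).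

Lemma sum_conf (F : conf -> R[i]) :
  \sum_(c : conf) F c =
  \sum_(p : 'I_#|{: rconf r}| * 'I_#|{: rconf (~: r)}|) F (glue (enum_val p.1) (enum_val p.2)).
Proof.
rewrite (reindex (fun p : 'I_#|{: rconf r}| * 'I_#|{: rconf (~: r)}| =>
   glue (enum_val p.1) (enum_val p.2))) //.
exists (fun c => (rkr c, rkc c)) => [[p1 p2] _|c _] /=.
  by rewrite /rkr /rkc restr_glue_r restr_glue_c !enum_valK.
by rewrite /rkr /rkc !enum_rankK glueK.
Qed.

Lemma kron_mul A B C D : kron A B *m kron C D = kron (A *m C) (B *m D).
Proof.
apply/matrixP => i j; rewrite /kron /mxo !mxE.
rewrite (sum_enum (K := R[i]) (I := site V E) (D := dim)).
rewrite sum_conf big_distrlr pair_bigA /=.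
apply: eq_bigr => -[p1 p2] _ /=.
rewrite !mxE !enum_rankK /rkr /rkc restr_glue_r restr_glue_c !enum_valK.
by rewrite mulrACA.
Qed.

Lemma restr_eqE S (c c' : conf) :
  (restr S c == restr S c') = [forall x in S, c x == c' x].
Proof.
apply/eqP/forall_inP => [h x hx | h].
  by move/ffunP: h => /(_ (exist _ x hx)); rewrite !ffunE /= => ->.
by apply/ffunP => -[x hx]; rewrite !ffunE /=; apply/eqP/h.
Qed.

Lemma embed_kron (o : 'M[R[i]]_#|{: rconf r}|) : embed o = kron o 1%:M.
Proof.
apply/matrixP => i j; rewrite /embed /kron /mxo !mxE.
by rewrite (inj_eq enum_rank_inj) restr_eqE.
Qed.

Lemma prod_split (F : site V E -> R[i]) :
  \prod_x F x = (\prod_(y : {x | x \in r}) F (val y)) *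
                 \prod_(y : {x | x \in ~: r}) F (val y).
Proof.
rewrite (bigID (fun x => x \in r)) /= -big_sub; congr (_ * _).
rewrite -big_sub; apply: eq_bigl => x; by rewrite inE.
Qed.

Lemma tens_kron (M : forall x, 'M[R[i]]_(dim x)) :
  tens M = kron (tensS r M) (tensS (~: r) M).
Proof.
apply/matrixP => i j; rewrite /tens /kron /tensS /gtens /mxo !mxE.
rewrite /rkr /rkc !enum_rankK prod_split; congr (_ * _).
  by apply: eq_bigr => y _; rewrite !ffunE.
by apply: eq_bigr => y _; rewrite !ffunE.
Qed.
End Kron.

Lemma ReSum (R : realType) (I : Type) (s : seq I) (f : I -> R[i]) :
  complex.Re (\sum_(k <- s) f k) = \sum_(k <- s) complex.Re (f k).
Proof. elim: s => [|k s IH]; first by rewrite !big_nil. by rewrite !big_cons ReD IH. Qed.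

Lemma ReJ (R : realType) (z : R[i]) :
  complex.Re (z * Num.conj z) = complex.Re z ^+ 2 + complex.Im z ^+ 2.
Proof. case: z => a b /=; rewrite !expr2; lra. Qed.

Lemma unit_bound (R : realType) n (A : 'M[R[i]]_n) : A *m adj A = 1%:M ->
  forall i j, `|complex.Re (A i j)| <= 1 /\ `|complex.Im (A i j)| <= 1.
Proof.
move=> H i j.
have h := congr1 (fun M : 'M[R[i]]_n => complex.Re (M i i)) H; move: h => /=.
rewrite !mxE eqxx /= ReSum.
under eq_bigr do rewrite /adj !mxE ReJ.
rewrite (bigD1 j) //=.
set s := \sum_(k | _) _.
have s0 : 0 <= s by apply: sumr_ge0 => k _; apply: addr_ge0; exact: sqr_ge0.
move=> h; rewrite !ler_norml; split; apply/andP; split; nra.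
Qed.

Lemma cnice_ext (R : realType) d (G : measurableType d) (f h : G -> R[i]) :
  f =1 h -> cnice f -> cnice h.
Proof. by move=> /funext ->. Qed.

Section RingLemmas.
Context (T : pzRingType) (I : eqType) (Q : I -> T)
  (Hid : forall v, Q v * Q v = Q v) (Hc : forall v w, Q v * Q w = Q w * Q v).

Lemma prod_comm (s : seq I) (p : pred I) X :
  (forall v, v \in s -> X * Q v = Q v * X) ->
  X * \prod_(v <- s | p v) Q v = \prod_(v <- s | p v) Q v * X.
Proof.
elim: s => [|u s IH] h; first by rewrite big_nil mulr1 mul1r.
rewrite big_cons; case: (p u); last by apply: IH => v hv; apply: h; rewrite inE hv orbT.
rewrite mulrA h ?mem_head // -mulrA IH ?mulrA // => v hv; apply: h; by rewrite inE hv orbT.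
Qed.

Lemma prod_absl (s : seq I) (p : pred I) Y :
  (forall v, v \in s -> Q v * Y = Y) -> \prod_(v <- s | p v) Q v * Y = Y.
Proof.
elim: s => [|u s IH] h; first by rewrite big_nil mul1r.
have h' : forall v, v \in s -> Q v * Y = Y by move=> v hv; apply: h; rewrite inE hv orbT.
rewrite big_cons; case: (p u); last exact: IH.
by rewrite -mulrA IH // h ?mem_head.
Qed.

Lemma prod_absr (s : seq I) (p : pred I) Y :
  (forall v, v \in s -> Y * Q v = Y) -> Y * \prod_(v <- s | p v) Q v = Y.
Proof.
elim: s => [|u s IH] h; first by rewrite big_nil mulr1.
have h' : forall v, v \in s -> Y * Q v = Y by move=> v hv; apply: h; rewrite inE hv orbT.
rewrite big_cons; case: (p u); last exact: IH.
by rewrite mulrA h ?mem_head // IH.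
Qed.

Lemma Q_prod (s : seq I) v : v \in s -> Q v * \prod_(w <- s) Q w = \prod_(w <- s) Q w.
Proof.
elim: s => [|u s IH] //; rewrite inE big_cons => /predU1P [->|hv].
  by rewrite mulrA Hid.
by rewrite mulrA Hc -mulrA IH.
Qed.

Lemma prod_Q (s : seq I) v : v \in s -> \prod_(w <- s) Q w * Q v = \prod_(w <- s) Q w.
Proof.
move=> hv; rewrite -prod_comm ?Q_prod // => w _; exact: Hc.
Qed.
End RingLemmas.

Section GaugeProofs.
Context (R : realType) (d : measure_display) (G : measurableType d)
  (mul : G -> G -> G) (inv : G -> G) (one : G)
  (mu : probability G R)
  (V E : finType) (src tgt : E -> V) (dim : V + E -> nat)
  (U : forall v : V, G -> 'M[R[i]]_(dim (inl v)))
  (L Rinv : forall e : E, G -> 'M[R[i]]_(dim (inr e)))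
  (Hgrp : is_group mul inv one)
  (Hhaar : is_haar mul mu)
  (HU : forall v, unitary_rep mul one (U v))
  (HL : forall e, unitary_rep mul one (L e))
  (HR : forall e, unitary_rep mul one (Rinv e))
  (HLR : forall e g h, L e g *m Rinv e h = Rinv e h *m L e g).

Lemma mulA g h k : mul g (mul h k) = mul (mul g h) k.
Proof. by case: Hgrp. Qed.
Lemma mul1g g : mul one g = g. Proof. by case: Hgrp => _ /(_ g) []. Qed.
Lemma mulg1 g : mul g one = g. Proof. by case: Hgrp => _ /(_ g) []. Qed.
Lemma mulVg g : mul (inv g) g = one. Proof. by case: Hgrp => _ _ /(_ g) []. Qed.
Lemma mulgV g : mul g (inv g) = one. Proof. by case: Hgrp => _ _ /(_ g) []. Qed.
Lemma invM g h : inv (mul g h) = mul (inv h) (inv g).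
Proof.
have e : mul (mul g h) (mul (inv h) (inv g)) = one.
  by rewrite -mulA (mulA h) mulgV mul1g mulgV.
by rewrite -[inv (mul g h)]mulg1 -e mulA mulVg mul1g.
Qed.

Section Rep.
Context n (rho : G -> 'M[R[i]]_n) (Hr : unitary_rep mul one rho).
Lemma rep1 : rho one = 1%:M. Proof. by case: Hr. Qed.
Lemma repM g h : rho g *m rho h = rho (mul g h). Proof. by case: Hr => _ ->. Qed.
Lemma repV g : rho (inv g) = adj (rho g).
Proof.
case: Hr => _ _ hu _.
by rewrite -[rho (inv g)]mulmx1 -(hu g) mulmxA repM mulVg rep1 mul1mx.
Qed.
Lemma rep_nice i j : cnice (fun g => rho g i j).
Proof.
case: Hr => _ _ hu /(_ i j) [m1 m2]; split; split => //.
  by exists 1 => g; case: (unit_bound (hu g) i j).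
by exists 1 => g; case: (unit_bound (hu g) i j).
Qed.
Lemma repV_nice i j : cnice (fun g => rho (inv g) i j).
Proof.
have := rep_nice j i; rewrite /cnice /rnice => -[[m1 [M1 b1]] [m2 [M2 b2]]].
apply: (cnice_ext (f := fun g => Num.conj (rho g j i))).
  by move=> g; rewrite repV /adj !mxE.
have e1 : (fun g => complex.Re (Num.conj (rho g j i))) = (fun g => complex.Re (rho g j i)).
  by apply: funext => g; case: (rho g j i).
have e2 : (fun g => complex.Im (Num.conj (rho g j i))) = (fun g => - complex.Im (rho g j i)).
  by apply: funext => g; case: (rho g j i).
rewrite /cnice e1 e2; split; split => //; first by exists M1.
- exact: measurable_funN.
- by exists M2 => g; rewrite normrN.
Qed.
End Rep.


Notation gs := (gauge_site src tgt U L Rinv).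
Notation A := (gauge src tgt U L Rinv).

Lemma if_comm n (c1 c2 : bool) (X Y : 'M[R[i]]_n) : ~~ (c1 && c2) ->
  (if c1 then X else 1%:M) *m (if c2 then Y else 1%:M) =
  (if c2 then Y else 1%:M) *m (if c1 then X else 1%:M).
Proof. by case: c1; case: c2 => //= _; rewrite ?mul1mx ?mulmx1. Qed.

Lemma LR_if e (c1 c2 : bool) g h :
  (if c1 then Rinv e g else 1%:M) *m (if c2 then L e h else 1%:M) =
  (if c2 then L e h else 1%:M) *m (if c1 then Rinv e g else 1%:M).
Proof. by case: c1; case: c2; rewrite ?mul1mx ?mulmx1 // HLR. Qed.

Lemma if_rep n (rho : G -> 'M[R[i]]_n) (c : bool) g h : unitary_rep mul one rho ->
  (if c then rho g else 1%:M) *m (if c then rho h else 1%:M) =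
  (if c then rho (mul g h) else 1%:M).
Proof. by case: c => // hr; [rewrite repM | rewrite mulmx1]. Qed.

Lemma comm4 n (a1 b1 a2 b2 : 'M[R[i]]_n) :
  b1 *m a2 = a2 *m b1 -> b2 *m a1 = a1 *m b2 -> a1 *m a2 = a2 *m a1 ->
  b1 *m b2 = b2 *m b1 -> (a1 *m b1) *m (a2 *m b2) = (a2 *m b2) *m (a1 *m b1).
Proof.
move=> h1 h2 h3 h4.
rewrite -mulmxA (mulmxA b1) h1 -mulmxA mulmxA h3 -mulmxA h4.
by rewrite -mulmxA (mulmxA b2) h2 !mulmxA.
Qed.

Lemma gs_mul v g h x : gs v g x *m gs v h x = gs v (mul g h) x.
Proof.
case: x => [w|e] /=.
  by case: eqP => [->|_]; [rewrite repM | rewrite mulmx1].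
rewrite -mulmxA (mulmxA _ (if src e == v then _ else _)) LR_if.
by rewrite !mulmxA -(mulmxA _ _ (if tgt e == v then _ else _)) !if_rep.
Qed.

Lemma gs_one v x : gs v one x = 1%:M.
Proof.
case: x => [w|e] /=; first by case: ifP => // _; rewrite rep1.
by case: ifP => _; case: ifP => _; rewrite ?rep1 ?mulmx1.
Qed.

Lemma gs_comm v w g h x : v != w ->
  gs v g x *m gs w h x = gs w h x *m gs v g x.
Proof.
move=> nvw; case: x => [u|e] /=.
  apply: if_comm; apply/negP => /andP[/eqP -> /eqP e]; by rewrite e eqxx in nvw.
have hs : ~~ ((src e == v) && (src e == w)).
  by apply/negP => /andP[/eqP e1 /eqP e2]; move: nvw; rewrite -e1 -e2 eqxx.
have ht : ~~ ((tgt e == v) && (tgt e == w)).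
  by apply/negP => /andP[/eqP e1 /eqP e2]; move: nvw; rewrite -e1 -e2 eqxx.
apply: comm4; [exact: LR_if | exact: LR_if | exact: if_comm | exact: if_comm].
Qed.


Lemma gsE v g : gs v g = fun x => gs v g x. Proof. by []. Qed.

Lemma A_mul v g h : A v g *m A v h = A v (mul g h).
Proof.
rewrite /gauge !tens_gtens gtens_mul; congr gtens.
by apply: functional_extensionality_dep => x; exact: gs_mul.
Qed.

Lemma A_one v : A v one = 1%:M.
Proof.
rewrite /gauge tens_gtens -(gtens1 R[i] (I := site V E) dim); congr gtens.
by apply: functional_extensionality_dep => x; exact: gs_one.
Qed.

Lemma A_comm v w g h : v != w -> A v g *m A w h = A w h *m A v g.
Proof.
move=> nvw; rewrite /gauge !tens_gtens !gtens_mul; congr gtens.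
by apply: functional_extensionality_dep => x; exact: gs_comm.
Qed.

Lemma A_invr v g : A v g *m A v (inv g) = 1%:M.
Proof. by rewrite A_mul mulgV A_one. Qed.
Lemma A_invl v g : A v (inv g) *m A v g = 1%:M.
Proof. by rewrite A_mul mulVg A_one. Qed.

Lemma tensS_mul S v g h :
  tensS S (gs v g) *m tensS S (gs v h) = tensS S (gs v (mul g h)).
Proof.
rewrite /tensS gtens_mul; congr gtens.
by apply: functional_extensionality_dep => x; exact: gs_mul.
Qed.

Lemma tensS_one S v : tensS S (gs v one) = 1%:M.
Proof.
rewrite /tensS -(gtens1 R[i] (I := {x | x \in S}) (fun y => dim (val y))); congr gtens.
by apply: functional_extensionality_dep => x; exact: gs_one.
Qed.

Definition goodk (k : G -> G) := forall n (rho : G -> 'M[R[i]]_n),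
  unitary_rep mul one rho -> forall i j, cnice (fun g => rho (k g) i j).

Lemma goodk_id : goodk id. Proof. move=> n rho hr i j; exact: rep_nice. Qed.
Lemma goodk_inv : goodk inv. Proof. move=> n rho hr i j; exact: repV_nice. Qed.

Lemma if_nice n (c : bool) (F : G -> 'M[R[i]]_n) : mnice F ->
  mnice (fun g => if c then F g else 1%:M).
Proof. by case: c => // _; exact: mnice_cst. Qed.

Lemma gs_nice k v x : goodk k -> mnice (fun g => gs v (k g) x).
Proof.
move=> hk; case: x => [w|e] /=.
  by apply: if_nice => i j; exact: hk.
apply: mnice_mul; apply: if_nice => i j; exact: hk.
Qed.

Lemma gtens_nice (I : finType) (D : I -> nat) (M : G -> forall y, 'M[R[i]]_(D y)) :
  (forall y, mnice (fun g => M g y)) -> mnice (fun g => gtens (M g)).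
Proof.
move=> hM i j; rewrite /gtens.
apply: (cnice_ext (f := fun g => \prod_y M g y ((enum_val i : gconf D) y) ((enum_val j : gconf D) y))).
  by move=> g; rewrite mxE.
apply: cnice_prod => y; exact: hM.
Qed.

Lemma A_nice k v : goodk k -> mnice (fun g => A v (k g)).
Proof. move=> hk; rewrite /gauge; apply: gtens_nice => y; exact: gs_nice. Qed.

Lemma tensS_nice k S v : goodk k -> mnice (fun g => tensS S (gs v (k g))).
Proof. move=> hk; rewrite /tensS; apply: gtens_nice => y; exact: gs_nice. Qed.


Notation P := (Pi src tgt U L Rinv mu).

Lemma PE v : P v = MI mu (A v). Proof. by []. Qed.

Lemma haar_l h : measurable_fun setT (fun g => mul h g) /\
  (forall B, measurable B -> mu ((fun g => mul h g) @^-1` B)%classic = mu B).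
Proof. by case: (Hhaar h). Qed.
Lemma haar_r h : measurable_fun setT (fun g => mul g h) /\
  (forall B, measurable B -> mu ((fun g => mul g h) @^-1` B)%classic = mu B).
Proof. by case: (Hhaar h). Qed.

Lemma Anice v : mnice (A v). Proof. exact: (A_nice v goodk_id). Qed.
Lemma Ainice v : mnice (fun g => A v (inv g)). Proof. exact: (A_nice v goodk_inv). Qed.

Lemma AP v g : A v g *m P v = P v.
Proof.
rewrite PE -MI_mull; last exact: Anice.
transitivity (MI mu (fun h => A v (mul g h))); first by apply: MI_ext => h; rewrite A_mul.
case: (haar_l g) => m1 m2; exact: (MI_comp (F := A v) m1 m2 (Anice v)).
Qed.

Lemma PA v g : P v *m A v g = P v.
Proof.
rewrite PE -MI_mulr; last exact: Anice.
transitivity (MI mu (fun h => A v (mul h g))); first by apply: MI_ext => h; rewrite A_mul.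
case: (haar_r g) => m1 m2; exact: (MI_comp (F := A v) m1 m2 (Anice v)).
Qed.

Lemma PP v : P v *m P v = P v.
Proof.
rewrite {2}PE -MI_mull; last exact: Anice.
transitivity (MI mu (fun _ => P v)); first by apply: MI_ext => h; rewrite PA.
exact: MI_cst.
Qed.

Lemma PAcomm v w h : v != w -> P v *m A w h = A w h *m P v.
Proof.
move=> nvw; rewrite PE -MI_mulr; last exact: Anice.
rewrite -MI_mull; last exact: Anice.
by apply: MI_ext => g; rewrite A_comm.
Qed.

Lemma Pcomm v w : P v *m P w = P w *m P v.
Proof.
case: (eqVneq v w) => [->//|nvw].
have e1 := @MI_mull _ _ _ mu _ (P v) _ (Anice w).
have e2 := @MI_mulr _ _ _ mu _ (P v) _ (Anice w).
have e3 : MI mu (fun g => P v *m A w g) = MI mu (fun g => A w g *m P v).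
  by apply: MI_ext => g; exact: PAcomm.
exact: (etrans (esym e1) (etrans e3 e2)).
Qed.

Definition avg v (Y : op dim R) := MI mu (fun g => A v (inv g) *m Y *m A v g).

Lemma avg_nice v (Y : op dim R) : mnice (fun g => A v (inv g) *m Y *m A v g).
Proof.
apply: mnice_mul; last exact: Anice.
apply: mnice_mul; [exact: Ainice | exact: mnice_cst].
Qed.

Lemma avg_A v h Y : A v h *m avg v Y = avg v Y *m A v h.
Proof.
have e : A v (inv h) *m avg v Y *m A v h = avg v Y.
  rewrite /avg -MI_mull; last exact: avg_nice.
  rewrite -MI_mulr; last first.
    by move=> i j; apply: mnice_mul; [exact: mnice_cst | exact: avg_nice].
  transitivity (MI mu (fun g => (fun k => A v (inv k) *m Y *m A v k) (mul g h))).
    apply: MI_ext => g /=.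
    by rewrite invM -A_mul -A_mul !mulmxA.
  case: (haar_r h) => m1 m2.
  exact: (MI_comp (F := fun k => A v (inv k) *m Y *m A v k) m1 m2 (avg_nice v Y)).
rewrite -{1}e !mulmxA A_invr mul1mx; by [].
Qed.

Lemma P_avg v Y : P v *m avg v Y = avg v Y *m P v.
Proof.
rewrite PE -MI_mulr; last exact: Anice.
rewrite -MI_mull; last exact: Anice.
by apply: MI_ext => g; rewrite avg_A.
Qed.

Lemma P_avg' w v Y : w != v -> P w *m Y = Y *m P w ->
  P w *m avg v Y = avg v Y *m P w.
Proof.
move=> nwv hY; rewrite /avg -MI_mull; last exact: avg_nice.
rewrite -MI_mulr; last exact: avg_nice.
apply: MI_ext => g.
by rewrite !mulmxA PAcomm // -(mulmxA _ (P w) Y) hY mulmxA -(mulmxA _ (P w)) PAcomm // !mulmxA.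
Qed.

Lemma Q_avg (Q : op dim R) v Y : (forall g, Q *m A v g = Q) -> (forall g, A v g *m Q = Q) ->
  Q *m avg v Y *m Q = Q *m Y *m Q.
Proof.
move=> h1 h2; rewrite /avg -MI_mull; last exact: avg_nice.
rewrite -MI_mulr; last first.
  by move=> i j; apply: mnice_mul; [exact: mnice_cst | exact: avg_nice].
transitivity (MI mu (fun _ => Q *m Y *m Q)); last exact: MI_cst.
by apply: MI_ext => g; rewrite !mulmxA h1 -!mulmxA h2.
Qed.

Lemma MI_kron r (f : G -> 'M[R[i]]_#|{: rconf dim r}|) : mnice f ->
  MI mu (fun g => kron (f g) (1%:M : 'M[R[i]]_#|{: rconf dim (~: r)}|)) = kron (MI mu f) (1%:M : 'M[R[i]]_#|{: rconf dim (~: r)}|).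
Proof.
move=> hf; apply/matrixP => i j; rewrite /kron /mxo !mxE.
transitivity (cint mu (fun g => f g (rkr r (enum_val i)) (rkr r (enum_val j)) *
   (1%:M : 'M[R[i]]_#|{: rconf dim (~: r)}|) (rkc r (enum_val i)) (rkc r (enum_val j)))).
  by apply: cint_ext => g; rewrite !mxE.
by rewrite cint_mulr // mxE.
Qed.

Lemma tSnice (S : {set site V E}) v : mnice (fun g => tensS S (gs v g)).
Proof. rewrite /tensS; apply: gtens_nice => y; exact: (@gs_nice id v (val y) goodk_id). Qed.
Lemma tSinice (S : {set site V E}) v : mnice (fun g => tensS S (gs v (inv g))).
Proof. rewrite /tensS; apply: gtens_nice => y; exact: (@gs_nice inv v (val y) goodk_inv). Qed.

Lemma avg_alg (r : {set site V E}) v (Y : op dim R) : Defs.in_alg r Y -> Defs.in_alg r (avg v Y).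
Proof.
case=> y ->; rewrite embed_kron.
exists (MI mu (fun g => tensS r (gs v (inv g)) *m y *m tensS r (gs v g))).
rewrite embed_kron -MI_kron; last first.
  apply: mnice_mul; last exact: tSnice.
  by apply: mnice_mul; [exact: tSinice | exact: mnice_cst].
rewrite /avg; apply: MI_ext => g.
rewrite /gauge !(tens_kron r) !kron_mul mulmx1 tensS_mul mulVg tensS_one.
by [].
Qed.

Notation PGI := (Pi_GI src tgt U L Rinv mu).

Lemma PPr v : P v * P v = P v. Proof. exact: PP. Qed.
Lemma Pcommr v w : P v * P w = P w * P v. Proof. exact: Pcomm. Qed.

Lemma PGIE : PGI = \prod_(v <- index_enum V | true) P v. Proof. by []. Qed.

Lemma PGI_P v : PGI * P v = PGI.
Proof. rewrite PGIE; apply: prod_Q; [exact: PPr | exact: Pcommr | exact: mem_index_enum]. Qed.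
Lemma P_PGI v : P v * PGI = PGI.
Proof. rewrite PGIE; apply: Q_prod; [exact: PPr | exact: Pcommr | exact: mem_index_enum]. Qed.

Lemma PGI_A v g : PGI * A v g = PGI.
Proof. by rewrite -{1}(PGI_P v) -mulrA [P v * _]PA PGI_P. Qed.
Lemma A_PGI v g : A v g * PGI = PGI.
Proof. by rewrite -{1}(P_PGI v) mulrA [A v g * _]AP P_PGI. Qed.

Lemma PGI_idem : PGI * PGI = PGI.
Proof. by rewrite {1}PGIE prod_absl // => v _; exact: P_PGI. Qed.

Lemma comm_PGI (Y : op dim R) : (forall v, Y * P v = P v * Y) -> Y * PGI = PGI * Y.
Proof. by move=> h; rewrite PGIE prod_comm // => v _; exact: h. Qed.

Fixpoint avgs (s : seq V) (Y : op dim R) : op dim R :=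
  if s is v :: s' then avg v (avgs s' Y) else Y.

Lemma avgs_alg r s Y : Defs.in_alg r Y -> Defs.in_alg r (avgs s Y).
Proof. by elim: s => [//|v s IH] /= hY; apply: avg_alg; exact: IH. Qed.

Lemma avgs_PGI s Y : PGI * avgs s Y * PGI = PGI * Y * PGI.
Proof.
elim: s => [//|v s IH] /=; rewrite -IH.
by apply: Q_avg => g; [exact: PGI_A | exact: A_PGI].
Qed.

Lemma avgs_comm s Y w : w \in s -> P w * avgs s Y = avgs s Y * P w.
Proof.
elim: s => [//|v s IH]; rewrite inE /= => hw.
case: (eqVneq w v) => [->|nwv]; first exact: P_avg.
apply: P_avg' => //; apply: IH; by case/predU1P: hw => // e; rewrite e eqxx in nwv.
Qed.

Lemma main_inner (r : {set site V E}) (X : op dim R) :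
  (exists O : op dim R, Defs.in_alg r O /\ X = PGI *m O *m PGI)
  <->
  (exists Ohat : op dim R,
     [/\ in_hat_alg src tgt U L Rinv mu r Ohat,
         Ohat *m PGI = PGI *m Ohat
       & X = Ohat *m PGI]).
Proof.
rewrite /in_hat_alg; set PV := Pi_Vr src tgt U L Rinv mu r.
have PV_PGI : PV * PGI = PGI by rewrite /PV /Pi_Vr prod_absl // => v _; exact: P_PGI.
have PGI_PV : PGI * PV = PGI by rewrite /PV /Pi_Vr prod_absr // => v _; exact: PGI_P.
split.
- case=> O [hO ->].
  set O' := avgs (index_enum V) O.
  have cO' : O' * PGI = PGI * O'.
    apply: comm_PGI => v; apply/esym; apply: avgs_comm; exact: mem_index_enum.
  have key : (PV * O' * PV) * PGI = PGI * O'.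
    by rewrite -mulrA PV_PGI -mulrA cO' mulrA PV_PGI.
  exists (PV * O' * PV); split.
  + exists O'; split => //; exact: avgs_alg.
  + by rewrite !mulmxE key !mulrA PGI_PV -cO' -mulrA PGI_PV.
  + rewrite !mulmxE key -(avgs_PGI (index_enum V)) -/O'.
    by rewrite -mulrA cO' mulrA PGI_idem.
- case=> Oh [[O [hO eOh]] cOh ->]; exists O; split => //.
  rewrite !mulmxE in eOh cOh *.
  rewrite -{1}PGI_idem mulrA cOh eOh.
  by rewrite !mulrA PGI_PV -mulrA PV_PGI.
Qed.

End GaugeProofs.




End Helpers.

Local Open Scope ring_scope.

Theorem corollary4
  (R : realType) (d : measure_display) (G : measurableType d)
  (mul : G -> G -> G) (inv : G -> G) (one : G)
  (mu : probability G R)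
  (V E : finType) (src tgt : E -> V) (dim : V + E -> nat)
  (U : forall v : V, G -> 'M[R[i]]_(dim (inl v)))
  (L Rinv : forall e : E, G -> 'M[R[i]]_(dim (inr e)))
  (Hgrp : is_group mul inv one)
  (Hhaar : is_haar mul mu)
  (HU : forall v, unitary_rep mul one (U v))
  (HL : forall e, unitary_rep mul one (L e))
  (HR : forall e, unitary_rep mul one (Rinv e))
  (HLR : forall e g h, L e g *m Rinv e h = Rinv e h *m L e g)
  (r : {set site V E}) (X : op dim R) :
  (exists O : op dim R, in_alg r O /\
     X = Pi_GI src tgt U L Rinv mu *m O *m Pi_GI src tgt U L Rinv mu)
  <->
  (exists Ohat : op dim R,
     [/\ in_hat_alg src tgt U L Rinv mu r Ohat,
         Ohat *m Pi_GI src tgt U L Rinv mu = Pi_GI src tgt U L Rinv mu *m Ohat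
       & X = Ohat *m Pi_GI src tgt U L Rinv mu]).
Proof.
exact: (@Helpers.main_inner R d G mul inv one mu V E src tgt dim U L Rinv
  Hgrp Hhaar HU HL HR HLR r X).
Qed.
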